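(* Let $\{F_n\}_{n\geq 0}$ be a sequence of positive integers with $F_0=1$ and $F_1=1$, let $\Pi$ be the cobweb poset it determines, and for $n\ge 0$ let $\chi_n(t)=\sum_{x\in P_n}\mu(0,x)\,t^{n-r(x)}$ be the characteristic polynomial of the finite cobweb subposet $P_n$. Then $\chi_0(t)=1$ and $\chi_n(t)=t^n-t^{n-1}$ for all $n\geq 1$.
   Context: Cobweb poset: given the sequence $\{F_n\}_{n\ge 0}$, for $s\geq 0$ let the $s$-th level be $\Phi_s=\{\langle j,s\rangle : 1\leq j\leq F_s\}$, and let $V=\bigcup_{s\geq 0}\Phi_s$. The cobweb poset is $\Pi=(V,\leq)$ where for $x=\langle s,t\rangle$, $y=\langle u,v\rangle$ one has $x\leq y$ iff ($t<v$) or ($t=v$ and $s=u$). Its rank function is $r(x)=s$ for $x\in\Phi_s$. For $n\geq 0$, $P_n$ is the set $\bigcup_{0\leq s\leq n}\Phi_s$ with the induced order; it has unique minimal element $0=\langle 1,0\rangle$. $\mu$ denotes the M\''obius function of $P_n$. *)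

(* Defs.v *)
From HB Require Import structures.
From mathcomp Require Import all_boot all_order all_algebra.
Set Implicit Arguments. Unset Strict Implicit. Unset Printing Implicit Defensive.
Import GRing.Theory.
Local Open Scope ring_scope.

(* Fuel #|T| bounds the length of any strict chain, so it never runs out
   on a partial order. *)
Fixpoint mobius_fuel (T : finType) (le : rel T) (k : nat) (x y : T) : int :=
  if x == y then 1
  else if k is k'.+1 then
    (if le x y then
       - \sum_(z : T | le x z && le z y && (z != y)) mobius_fuel le k' x z
     else 0)
  else 0.

Definition mobius (T : finType) (le : rel T) (x y : T) : int :=
  mobius_fuel le #|T| x y.

(* The finite cobweb subposet P_n: elements <j,s> with s <= n and
   j ranging over F s values (the ordinal j : 'I_(F s) encodes j+1). *)
Definition cobweb (F : nat -> nat) (n : nat) : finType :=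
  {s : 'I_n.+1 & 'I_(F s)}.

Definition crank (F : nat -> nat) (n : nat) (x : cobweb F n) : nat := tag x.

Definition cle (F : nat -> nat) (n : nat) : rel (cobweb F n) :=
  fun x y => (crank x < crank y)%N || (x == y).

Definition cobweb_charpoly (F : nat -> nat) (n : nat) (zero : cobweb F n)
  : {poly int} :=
  \sum_(x : cobweb F n) (mobius (@cle F n) zero x)%:P * 'X^(n - crank x).

(* Main.v *)
Require Import Defs.
From mathcomp Require Import all_boot all_order all_algebra.
Import GRing.Theory.
Local Open Scope ring_scope.

Definition mm (s : nat) : int := if s == 0%N then 1 else if s == 1%N then -1 else 0.

Lemma rank0_uniq (F : nat -> nat) (F0 : F 0%N = 1%N) n (zero z : cobweb F n)
  (hz : crank zero = 0%N) (h : crank z = 0%N) : z = zero.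
Proof.
case: z h => i j; case: zero hz => i0 j0 /= hi0 hi.
rewrite /crank /= in hi hi0.
have ei : i = i0 by apply: val_inj; rewrite /= hi hi0.
subst i0.
have ej : j = j0.
  have hF : F i = 1%N by rewrite hi F0.
  have Hj : (j < 1)%N by rewrite -hF ltn_ord.
  have Hj0 : (j0 < 1)%N by rewrite -hF ltn_ord.
  apply: val_inj => /=; move: Hj Hj0; rewrite !ltnS !leqn0 => /eqP -> /eqP ->. done.
by rewrite ej.
Qed.

Lemma sum_mm s : (1 <= s)%N -> \sum_(i < s) mm i = (if s == 1%N then 1 else 0).
Proof.
case: s => // s _; elim: s => [|s IH]; first by rewrite big_ord1.
rewrite big_ord_recr /= IH /mm /=; by case: s {IH}.
Qed.

Lemma mmF (F : nat -> nat) (F0 : F 0%N = 1%N) (F1 : F 1%N = 1%N) i :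
  mm i *+ F i = mm i.
Proof.
rewrite /mm; case: i => [|[|i]] /=; rewrite ?F0 ?F1 //.
by rewrite mul0rn.
Qed.

Lemma key (F : nat -> nat) (F0 : F 0%N = 1%N) (F1 : F 1%N = 1%N) n
  (zero : cobweb F n) (hzero : crank zero = 0%N) k (x : cobweb F n) :
  (crank x < k)%N -> mobius_fuel (@cle F n) k zero x = mm (crank x).
Proof.
elim: k x => [|k IH] x // hk /=.
case: eqP => [<-|nex]; first by rewrite hzero.
have hx : (0 < crank x)%N.
  rewrite lt0n; apply/negP => /eqP h; apply: nex; by rewrite (@rank0_uniq F F0 n zero _ hzero h).
rewrite /cle; rewrite [X in (X < _)%N]hzero hx /=.
rewrite (eq_bigl (fun z => (crank z < crank x)%N)); last first.
  move=> z; rewrite hzero.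
  case: (ltnP (crank z) (crank x)) => hzx.
    rewrite /=.
    have -> : (z != x) by apply/eqP => e; rewrite e ltnn in hzx.
    rewrite andbT.
    case: (posnP (crank z)) => [h|h]; last by [].
    by rewrite (@rank0_uniq F F0 n zero _ hzero h) eqxx orbT.
  rewrite /= andbC; case: (z =P x) => [->|] /=; first by [].
  by move=> _; rewrite andbF.
rewrite (eq_bigr (fun z => mm (crank z))); last first.
  move=> z hz; apply: IH; exact: leq_trans hz hk.
have hs : (crank x <= n)%N by rewrite /crank -ltnS ltn_ord.
set s := crank x in hx hs *.
transitivity (- \sum_(i : 'I_n.+1 | (i < s)%N) \sum_(j : 'I_(F i)) mm i).
  congr (- _).
  rewrite (sig_big_dep (fun i : 'I_n.+1 => (i < s)%N) (fun i _ => true)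
          (fun i (j : 'I_(F i)) => mm i)).
  by apply: eq_bigl => p; rewrite andbT.
rewrite (eq_bigr (fun i : 'I_n.+1 => mm i)); last first.
  by move=> i _; rewrite sumr_const card_ord mmF.
rewrite -(big_ord_widen n.+1 (fun i => mm i)); last exact: leqW hs.
rewrite sum_mm // /mm.
by case: s hx {hs} => [|[|s]].
Qed.

Theorem mainTheorem3 (F : nat -> nat)
  (Fpos : forall m, (0 < F m)%N) (F0 : F 0%N = 1%N) (F1 : F 1%N = 1%N)
  (n : nat) (zero : cobweb F n) (hzero : crank zero = 0%N) :
  (n = 0%N -> cobweb_charpoly zero = 1) /\
  ((1 <= n)%N -> cobweb_charpoly zero = 'X^n - 'X^(n.-1)).
Proof.
have card : (n < #|cobweb F n|)%N.
  rewrite -sum1_card.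
  have -> : (\sum_(p : cobweb F n) 1 = \sum_(i : 'I_n.+1) \sum_(j : 'I_(F i)) 1)%N.
    by rewrite (sig_big_dep (fun _ : 'I_n.+1 => true) (fun i _ => true)
          (fun i (j : 'I_(F i)) => 1%N)).
  apply: (@leq_trans (\sum_(i < n.+1) 1)%N); first by rewrite sum1_card card_ord.
  apply: leq_sum => i _; by rewrite sum1_card card_ord Fpos.
have E : cobweb_charpoly zero = \sum_(i < n.+1) (mm i)%:P * 'X^(n - i).
  rewrite /cobweb_charpoly.
  rewrite (eq_bigr (fun x => (mm (crank x))%:P * 'X^(n - crank x))); last first.
    move=> x _; rewrite /mobius key //.
    apply: (leq_trans _ card); exact: (ltn_ord (tag x)).
  transitivity (\sum_(i : 'I_n.+1) \sum_(j : 'I_(F i)) (mm i)%:P * 'X^(n - i) : {poly int}).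
    by rewrite (sig_big_dep (fun _ : 'I_n.+1 => true) (fun i _ => true)
          (fun i (j : 'I_(F i)) => (mm i)%:P * 'X^(n - i))).
  apply: eq_bigr => i _; rewrite sumr_const card_ord.
  rewrite /mm; case: (nat_of_ord i) => [|[|j]] /=; rewrite ?F0 ?F1 //.
  by rewrite mul0r mul0rn.
rewrite E; split.
  by move=> ->; rewrite big_ord1 /mm /= mul1r expr0.
case: n {card E zero hzero} => // n _.
rewrite big_ord_recl big_ord_recl big1; last first.
  by move=> i _; rewrite /mm /= mul0r.
rewrite /mm /= subn0 subSS subn0 mul1r addr0.
by rewrite polyCN polyC1 mulN1r.
Qed.
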